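(* Let $N\geq 1$ and let $U\in M_{2N}(\mathbb{C})$ be a unitary matrix that is antisymmetric, i.e. $U^{\rm T}=-U$. Define the linear map $\Phi^U_{4N}:M_{4N}(\mathbb{C})\to M_{4N}(\mathbb{C})$ as follows: writing $X\in M_{4N}(\mathbb{C})$ in block form $X=\begin{pmatrix} X_{11} & X_{12}\\ X_{21} & X_{22}\end{pmatrix}$ with $X_{kl}\in M_{2N}(\mathbb{C})$, $$\Phi^U_{4N}(X)=\frac{1}{2N}\begin{pmatrix} \mathbb{I}_{2N}\,\mathrm{Tr}X_{22} & -\big(X_{12}+UX_{21}^{\rm T}U^\dagger\big)\\ -\big(X_{21}+UX_{12}^{\rm T}U^\dagger\big) & \mathbb{I}_{2N}\,\mathrm{Tr}X_{11}\end{pmatrix}.$$ Then $\Phi^U_{4N}$ is a positive map, i.e. $\Phi^U_{4N}(X)\geq 0$ for every positive semidefinite $X\in M_{4N}(\mathbb{C})$.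
   Context: $X^{\rm T}$ denotes the transpose, $U^\dagger$ the conjugate transpose, and $\mathbb{I}_{2N}$ the $2N\times 2N$ identity matrix. *)

(* Defs.v *)
From mathcomp Require Import all_boot all_order all_algebra.
From mathcomp Require Import sesquilinear spectral.
Set Implicit Arguments. Unset Strict Implicit. Unset Printing Implicit Defensive.
Import Order.TTheory GRing.Theory Num.Theory.
Local Open Scope ring_scope.
Local Open Scope sesquilinear_scope.

(* Complex numbers are modelled by an arbitrary numClosedFieldType C
   (e.g. 'complex R' for a real closed field R); M ^t* is the conjugate
   transpose (dagger). *)

Definition psdmx (C : numClosedFieldType) (n : nat) (A : 'M[C]_n) : Prop :=
  A ^t* = A /\ forall v : 'cV[C]_n, 0 <= (v ^t* *m A *m v) 0 0.

Definition PhiU (C : numClosedFieldType) (N : nat) (U : 'M[C]_(2 * N))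
  (X : 'M[C]_(2 * N + 2 * N)) : 'M[C]_(2 * N + 2 * N) :=
  let X11 := ulsubmx X in let X12 := ursubmx X in
  let X21 := dlsubmx X in let X22 := drsubmx X in
  ((2 * N)%:R)^-1 *:
    block_mx ((\tr X22)%:M) (- (X12 + U *m X21^T *m U^t*))
             (- (X21 + U *m X12^T *m U^t*)) ((\tr X11)%:M).

(* Main.v *)
Require Import Defs.
From mathcomp Require Import all_boot all_order all_algebra.
From mathcomp Require Import sesquilinear spectral.
From mathcomp Require Import ring.
Import Order.TTheory GRing.Theory Num.Theory.
Local Open Scope ring_scope.
Local Open Scope sesquilinear_scope.
Set Implicit Arguments. Unset Strict Implicit.

Section S.
Variable C : numClosedFieldType.

Lemma ctmul m n p (A : 'M[C]_(m, n)) (B : 'M[C]_(n, p)) :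
  (A *m B)^t* = B^t* *m A^t*.
Proof. by rewrite trmx_mul map_mxM. Qed.

Lemma mul_entry m n p (A : 'M[C]_(m, n)) (B : 'M[C]_(n, p)) i j :
  (A *m B) i j = (row i A *m col j B) 0 0.
Proof. by rewrite !mxE; apply: eq_bigr => k _; rewrite !mxE. Qed.

Lemma row_ct m n (P : 'M[C]_(m, n)) j : row j (P^t*) = (col j P)^t*.
Proof. by apply/matrixP => a b; rewrite !mxE. Qed.

Lemma psd_form n (Y : 'M[C]_n) (hY : psdmx Y) m (P : 'M[C]_(n, m)) :
  0 <= \tr (P^t* *m Y *m P).
Proof.
rewrite /mxtrace; apply: sumr_ge0 => j _.
by rewrite mul_entry row_mul row_ct; apply hY.2.
Qed.

Lemma ct_scalar n (s : C) : (s%:M : 'M[C]_n)^t* = (s^*)%:M.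
Proof. by apply/matrixP => a b; rewrite !mxE eq_sym rmorphMn. Qed.

Lemma ctB m n (A B : 'M[C]_(m, n)) : (A - B)^t* = A^t* - B^t*.
Proof. by rewrite linearB /= map_mxB. Qed.
Lemma ctD m n (A B : 'M[C]_(m, n)) : (A + B)^t* = A^t* + B^t*.
Proof. by rewrite linearD /= map_mxD. Qed.
Lemma ctN m n (A : 'M[C]_(m, n)) : (- A)^t* = - A^t*.
Proof. by rewrite linearN /= map_mxN. Qed.
Lemma ctZ m n a (A : 'M[C]_(m, n)) : (a *: A)^t* = a^* *: A^t*.
Proof. by rewrite linearZ /= map_mxZ. Qed.

Lemma bessel n (Y : 'M[C]_n) (hY : psdmx Y) (u1 u2 : 'cV[C]_n) (s : C) :
  u1^t* *m u1 = s%:M -> u2^t* *m u2 = s%:M -> u1^t* *m u2 = 0 ->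
  u2^t* *m u1 = 0 -> s^* = s ->
  0 <= s * (s * \tr Y - (u1^t* *m Y *m u1) 0 0 - (u2^t* *m Y *m u2) 0 0).
Proof.
move=> h1 h2 h12 h21 hs.
set S1 := u1 *m u1^t*; set S2 := u2 *m u2^t*.
set P := s%:M - S1 - S2.
have hS1 : S1^t* = S1 by rewrite /S1 ctmul trmxCK.
have hS2 : S2^t* = S2 by rewrite /S2 ctmul trmxCK.
have hP : P^t* = P.
  by rewrite /P !ctB hS1 hS2 ct_scalar hs.
have e11 : S1 *m S1 = s *: S1.
  by rewrite /S1 mulmxA -(mulmxA u1) h1 mul_mx_scalar -scalemxAl.
have e22 : S2 *m S2 = s *: S2.
  by rewrite /S2 mulmxA -(mulmxA u2) h2 mul_mx_scalar -scalemxAl.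
have e12 : S1 *m S2 = 0.
  by rewrite /S1 /S2 mulmxA -(mulmxA u1) h12 mulmx0 mul0mx.
have e21 : S2 *m S1 = 0.
  by rewrite /S1 /S2 mulmxA -(mulmxA u2) h21 mulmx0 mul0mx.
have PP : P *m P^t* = s *: P.
  rewrite hP /P !mulmxBl !mulmxBr e11 e22 e12 e21 mul_scalar_mx mul_mx_scalar.
  rewrite mul_mx_scalar mul_scalar_mx mul_scalar_mx.
  apply/matrixP => i j; rewrite !mxE; ring.
have := psd_form hY P.
rewrite mxtrace_mulC mulmxA PP -scalemxAl mxtraceZ.
congr (0 <= s * _).
rewrite /P !mulmxBl !linearB /= mul_scalar_mx mxtraceZ.
by rewrite /S1 /S2 -!mulmxA !(mxtrace_mulC u1) !(mxtrace_mulC u2) !mulmxA !trace_mx11.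
Qed.

Definition ff n m (u : 'cV[C]_n) (M : 'M[C]_(n, m)) (v : 'cV[C]_m) := (u^t* *m M *m v) 0 0.

Lemma entry_tr (M : 'M[C]_1) : M 0 0 = (M^T) 0 0.
Proof. by rewrite mxE. Qed.

Lemma conjmxK m n (A : 'M[C]_(m, n)) : map_mx Num.Def.conjC (map_mx Num.Def.conjC A) = A.
Proof. by apply/matrixP => i j; rewrite !mxE conjCK. Qed.

Lemma ct_entry (M : 'M[C]_1) : (M^t*) 0 0 = (M 0 0)^*.
Proof. by rewrite !mxE. Qed.

Lemma addE m n (A B : 'M[C]_(m, n)) i j : (A + B) i j = A i j + B i j.
Proof. by rewrite mxE. Qed.

Lemma block_form n (X : 'M[C]_(n + n)) (p q : 'cV[C]_n) :
  ((col_mx p q)^t* *m X *m col_mx p q) 0 0 =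
  ff p (ulsubmx X) p + ff p (ursubmx X) q + ff q (dlsubmx X) p + ff q (drsubmx X) q.
Proof.
rewrite -[X in LHS]submxK tr_col_mx map_row_mx mul_row_block mul_row_col.
rewrite !mulmxDl !addE /ff; ring.
Qed.

Lemma psd_comb n (X : 'M[C]_(n + n)) (hX : psdmx X) (p q : 'cV[C]_n) (a b : C) :
  a^* = a -> b^* = b ->
  0 <= a * a * ff p (ulsubmx X) p + a * b * ff p (ursubmx X) q
       + b * a * ff q (dlsubmx X) p + b * b * ff q (drsubmx X) q.
Proof.
move=> ha hb; have := hX.2 (col_mx (a *: p) (b *: q)).
rewrite block_form /ff !ctZ ha hb.
by rewrite -!scalemxAl -!scalemxAr !scalerA !mxE.
Qed.

Lemma herm_blocks n (X : 'M[C]_(n + n)) (hX : psdmx X) :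
  (ulsubmx X)^t* = ulsubmx X /\ (drsubmx X)^t* = drsubmx X /\
  (dlsubmx X) = (ursubmx X)^t*.
Proof.
have e : block_mx ((ulsubmx X)^t*) ((dlsubmx X)^t*) ((ursubmx X)^t*) ((drsubmx X)^t*)
   = block_mx (ulsubmx X) (ursubmx X) (dlsubmx X) (drsubmx X).
  by rewrite -map_block_mx -tr_block_mx submxK hX.1.
by case: (eq_block_mx e) => h1 h2 h3 h4.
Qed.

Lemma psd_ul n (X : 'M[C]_(n + n)) (hX : psdmx X) : psdmx (ulsubmx X).
Proof.
split; first by case: (herm_blocks hX).
move=> v; have := hX.2 (col_mx v 0).
by rewrite block_form /ff !(map_mx0, trmx0, mulmx0, mul0mx) !mxE !addr0.
Qed.

Lemma psd_dr n (X : 'M[C]_(n + n)) (hX : psdmx X) : psdmx (drsubmx X).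
Proof.
split; first by case: (herm_blocks hX) => _ [].
move=> v; have := hX.2 (col_mx 0 v).
by rewrite block_form /ff !(map_mx0, trmx0, mulmx0, mul0mx) !mxE !add0r.
Qed.

Lemma norm_eq0 n (x : 'cV[C]_n) : (x^t* *m x) 0 0 = 0 -> x = 0.
Proof.
rewrite mxE => h; apply/matrixP => i j; rewrite (ord1 j) mxE.
have hp : forall k : 'I_n, true -> 0 <= (x ^t*) 0 k * x k 0.
  by move=> k _; rewrite !mxE mulrC mul_conjC_ge0.
have := psumr_eq0P hp h (i:=i) isT.
by rewrite !mxE mulrC => /eqP; rewrite mul_conjC_eq0 => /eqP.
Qed.


Section U.
Variables (n : nat) (U : 'M[C]_n) (hanti : U^T = - U).
Local Notation cj := (map_mx (@Num.Def.conjC C)).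

Lemma eUt : U^t* = - cj U.
Proof. by rewrite hanti map_mxN. Qed.

Lemma ctcj m p (x : 'M[C]_(m, p)) : (cj x)^t* = x^T.
Proof. by apply/matrixP => i j; rewrite !mxE conjCK. Qed.

Lemma trct m p (x : 'M[C]_(m, p)) : (x^t*)^T = cj x.
Proof. by apply/matrixP => i j; rewrite !mxE. Qed.

Lemma swap_id (Z : 'M[C]_n) (x y : 'cV[C]_n) :
  ff x (U *m Z^T *m U^t*) y = ff (U *m cj y) Z (U *m cj x).
Proof.
rewrite /ff !ctmul ctcj eUt entry_tr !trmx_mul trmxK !trct hanti linearN /= map_trmx hanti map_mxN opprK.
by rewrite !mulmxN !mulNmx !mulmxA mulmxN !mulmxA. Qed.

Lemma tr11 (M : 'M[C]_1) : M^T = M.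
Proof. by apply/matrixP => i j; rewrite (ord1 i) (ord1 j) mxE. Qed.

Lemma antisym0 (K : 'M[C]_n) (w : 'cV[C]_n) : K^T = - K -> w^T *m K *m w = 0.
Proof.
move=> hK; set M := w^T *m K *m w.
have hM : M = - M.
  by rewrite -{1}[M]tr11 /M !trmx_mul trmxK hK mulNmx mulmxN mulmxA.
rewrite [M]mx11_scalar; have : M 0 0 = - M 0 0 by rewrite {1}hM mxE.
move/eqP; rewrite -subr_eq0 opprK -mulr2n mulrn_eq0 /= => /eqP ->.
by apply/matrixP => i j; rewrite !mxE mul0rn.
Qed.

Hypothesis hUU : U^t* *m U = 1%:M.

Lemma orthA (x : 'cV[C]_n) : x^t* *m (U *m cj x) = 0.
Proof. by rewrite -map_trmx mulmxA antisym0. Qed.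

Lemma orthB (x : 'cV[C]_n) : (U *m cj x)^t* *m x = 0.
Proof.
rewrite ctmul ctcj antisym0 // eUt linearN /= map_trmx hanti map_mxN.
by [].
Qed.

Lemma normU (x : 'cV[C]_n) : (U *m cj x)^t* *m (U *m cj x) = x^t* *m x.
Proof.
rewrite ctmul ctcj mulmxA -(mulmxA _ _ U) hUU mulmx1.
by rewrite -[LHS]tr11 trmx_mul trmxK map_trmx.
Qed.
End U.

Lemma herm_s n (x : 'cV[C]_n) : ((x^t* *m x) 0 0)^* = (x^t* *m x) 0 0.
Proof. by rewrite -ct_entry ctmul trmxCK. Qed.

Lemma norm_ge0 n (x : 'cV[C]_n) : 0 <= (x^t* *m x) 0 0.
Proof. by rewrite mxE; apply: sumr_ge0 => k _; rewrite !mxE mulrC mul_conjC_ge0. Qed.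

Lemma tr_ge0 n (Y : 'M[C]_n) : psdmx Y -> 0 <= \tr Y.
Proof. by move=> hY; have := psd_form hY 1%:M; rewrite ct_scalar conjC1 mul1mx mulmx1. Qed.

Lemma ffD n (x y : 'cV[C]_n) (M1 M2 : 'M[C]_n) : ff x (M1 + M2) y = ff x M1 y + ff x M2 y.
Proof. by rewrite /ff mulmxDr mulmxDl addE. Qed.


Lemma zeroE m n i j : (0 : 'M[C]_(m, n)) i j = 0.
Proof. by rewrite mxE. Qed.

Lemma main n (X : 'M[C]_(n + n)) (hX : psdmx X) (U : 'M[C]_n)
  (hanti : U^T = - U) (hUU : U^t* *m U = 1%:M) (x y : 'cV[C]_n) :
  0 <= \tr (drsubmx X) * (x^t* *m x) 0 0 + \tr (ulsubmx X) * (y^t* *m y) 0 0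
     - ff x (ursubmx X + U *m (dlsubmx X)^T *m U^t*) y
     - ff y (dlsubmx X + U *m (ursubmx X)^T *m U^t*) x.
Proof.
have trA := tr_ge0 (psd_ul hX); have trD := tr_ge0 (psd_dr hX).
have [s0|snz] := eqVneq ((x^t* *m x) 0 0) 0.
  have -> : x = 0 by apply: norm_eq0.
  rewrite /ff !(map_mx0, trmx0, mul0mx, mulmx0) !zeroE mulr0 add0r !subr0.
  by apply: mulr_ge0 => //; apply: norm_ge0.
have [t0|tnz] := eqVneq ((y^t* *m y) 0 0) 0.
  have -> : y = 0 by apply: norm_eq0.
  rewrite /ff !(map_mx0, trmx0, mul0mx, mulmx0) !zeroE mulr0 addr0 !subr0.
  by apply: mulr_ge0 => //; apply: norm_ge0.
rewrite !ffD !swap_id //.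
set u2 := U *m map_mx Num.Def.conjC x; set v2 := U *m map_mx Num.Def.conjC y.
set s := (x^t* *m x) 0 0; set t := (y^t* *m y) 0 0.
have hs : s^* = s := herm_s x. have ht : t^* = t := herm_s y.
have hns : (- s)^* = - s by rewrite rmorphN; congr (- _); exact: hs.
have spos : 0 < s by rewrite lt_def snz norm_ge0.
have tpos : 0 < t by rewrite lt_def tnz norm_ge0.
have c1 := psd_comb hX x y ht hns.
have c2 := psd_comb hX u2 v2 ht hns.
have bA := bessel (psd_ul hX) (mx11_scalar _) (etrans (normU hUU x) (mx11_scalar _))
   (orthA hanti x) (orthB hanti x) hs.
have bD := bessel (psd_dr hX) (mx11_scalar _) (etrans (normU hUU y) (mx11_scalar _))
   (orthA hanti y) (orthB hanti y) ht.
rewrite pmulr_rge0 // in bA; rewrite pmulr_rge0 // in bD.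
rewrite -(pmulr_rge0 _ (mulr_gt0 spos tpos)).
set G := (X in 0 <= s * t * X).
have -> : s * t * G =
  t * t * (s * \tr (ulsubmx X) - ff x (ulsubmx X) x - ff u2 (ulsubmx X) u2)
  + s * s * (t * \tr (drsubmx X) - ff y (drsubmx X) y - ff v2 (drsubmx X) v2)
  + (t * t * ff x (ulsubmx X) x + t * - s * ff x (ursubmx X) y +
       - s * t * ff y (dlsubmx X) x + - s * - s * ff y (drsubmx X) y)
  + (t * t * ff u2 (ulsubmx X) u2 + t * - s * ff u2 (ursubmx X) v2 +
       - s * t * ff v2 (dlsubmx X) u2 + - s * - s * ff v2 (drsubmx X) v2).
  by rewrite /G /ff; ring.
apply: addr_ge0; [apply: addr_ge0; [apply: addr_ge0|]|] => //.
  by apply: mulr_ge0 => //; apply: mulr_ge0; apply: ltW.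
by apply: mulr_ge0 => //; apply: mulr_ge0; apply: ltW.
Qed.

Lemma scaleE m n (a : C) (A : 'M[C]_(m, n)) i j : (a *: A) i j = a * A i j.
Proof. by rewrite mxE. Qed.

Lemma ff_scalar n (x : 'cV[C]_n) a : ff x (a%:M) x = a * (x^t* *m x) 0 0.
Proof. by rewrite /ff mul_mx_scalar -scalemxAl scaleE. Qed.

Lemma ffN n (x y : 'cV[C]_n) (M : 'M[C]_n) : ff x (- M) y = - ff x M y.
Proof. by rewrite /ff mulmxN mulNmx mxE. Qed.

End S.

Theorem proposition1 (C : numClosedFieldType) (N : nat) (hN : (1 <= N)%N)
  (U : 'M[C]_(2 * N)) (hU : U \is unitarymx) (hanti : U^T = - U)
  (X : 'M[C]_(2 * N + 2 * N)) (hX : psdmx X) :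
  psdmx (PhiU U X).
Proof.
have hUU : U^t* *m U = 1%:M by apply: mulmx1C; apply/unitarymxP.
have cpos : 0 < ((2 * N)%:R : C)^-1 by rewrite invr_gt0 ltr0n muln_gt0 hN.
split.
  have [hA [hD hB']] := herm_blocks hX.
  rewrite /PhiU ctZ.
  have -> : (((2 * N)%:R : C)^-1)^* = ((2 * N)%:R)^-1 by rewrite fmorphV /= conjC_nat.
  congr (_ *: _).
  rewrite tr_block_mx map_block_mx.
  have trc : forall (Y : 'M[C]_(2 * N)), Y^t* = Y -> (\tr Y)^* = \tr Y.
    by move=> Y hY; rewrite -trace_map_mx -mxtrace_tr map_trmx hY.
  congr block_mx.
  - by rewrite ct_scalar trc.
  - by rewrite ctN ctD !ctmul hB' !trmxCK trmxK trct mulmxA.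
  - by rewrite ctN ctD !ctmul hB' trmxK trmxCK conjmxK !mulmxA.
  - by rewrite ct_scalar trc.
move=> v; rewrite -[v]vsubmxK; set x := usubmx v; set y := dsubmx v.
rewrite /PhiU -scalemxAr -scalemxAl scaleE pmulr_rge0 //.
rewrite block_form block_mxKul block_mxKur block_mxKdl block_mxKdr.
rewrite !ffN !ff_scalar.
have h := main hX hanti hUU x y.
apply: (le_trans h); rewrite le_eqVlt; apply/orP; left; apply/eqP; ring.
Qed.
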